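(* Let $C,D,\beta>0$ and $N,M\in\mathbb{N}$. Suppose that $(x_j)_{j=1}^N$ and $(f_j)_{j=1}^N$ are sequences in $\ell_2^M$ satisfying $\|x_j\|=\|f_j\|=D$ for all $1\leq j\leq N$ and $$\Big\|\sum_{j=1}^N\varepsilon_j\langle x,f_j\rangle x_j\Big\|\leq C\|x\|\qquad\text{for all }x\in\ell_2^M\text{ and all scalars }\varepsilon_j\text{ with }|\varepsilon_j|=1.$$ If the frame operator of $(f_j)_{j=1}^N$ has eigenvalues $\lambda_1\geq\dots\geq\lambda_M$ satisfying $\lambda_1\leq\frac{\beta}{M}\sum_{j=1}^M\lambda_j$, then $(f_j)_{j=1}^N$ has Bessel bound $\frac{27}{4}K_1^{-4}\beta^2C$. Likewise, if the frame operator of $(x_j)_{j=1}^N$ has eigenvalues $\lambda_1\geq\dots\geq\lambda_M$ satisfying $\lambda_1\leq\frac{\beta}{M}\sum_{j=1}^M\lambda_j$, then $(x_j)_{j=1}^N$ has Bessel bound $\frac{27}{4}K_1^{-4}\beta^2C$.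
   Context: The frame operator of $(y_j)_{j=1}^N$ is $S(x)=\sum_j\langle x,y_j\rangle y_j$. A sequence $(y_j)$ has Bessel bound $B$ if $\sum_j|\langle x,y_j\rangle|^2\leq B\|x\|^2$ for all $x$. $K_1>0$ denotes the constant in Khintchine's inequality: for all $N\in\mathbb{N}$ and all scalars $(a_j)_{j=1}^N$, $2^{-N}\sum_{\delta_j=\pm1}\big|\sum_{j=1}^N\delta_j a_j\big|\geq K_1\big(\sum_{j=1}^N|a_j|^2\big)^{1/2}$. *)

(* Defs.v *)
(* Scalars live in a numClosedFieldType K (e.g. algC or
   complex R); the boolean [realscal] selects real scalars (entries in
   Num.real) or complex scalars (all of K). *)
From HB Require Import structures.
From mathcomp Require Import all_boot all_order all_algebra.
Set Implicit Arguments. Unset Strict Implicit. Unset Printing Implicit Defensive.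
Import Order.TTheory GRing.Theory Num.Theory.
Local Open Scope ring_scope.

Section Defs.
Variable K : numClosedFieldType.
Variable realscal : bool.

Definition is_scalar (z : K) : bool := realscal ==> (z \is Num.real).

Definition scalar_vec (M : nat) (x : 'I_M -> K) : Prop :=
  forall i, is_scalar (x i).

Definition dotp (M : nat) (x y : 'I_M -> K) : K := \sum_i x i * (y i)^*.

Definition l2norm (M : nat) (x : 'I_M -> K) : K := sqrtC (\sum_i `|x i| ^+ 2).

(* frame operator S(x) = sum_j <x, y_j> y_j, as an M x M matrix acting on
   column vectors: S i k = sum_j y_j i * conj (y_j k) *)
Definition frame_op (N M : nat) (y : 'I_N -> 'I_M -> K) : 'M[K]_M :=
  \matrix_(i, k) \sum_j y j i * (y j k)^*.

Definition bessel_bound (N M : nat) (y : 'I_N -> 'I_M -> K) (B : K) : Prop :=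
  forall x : 'I_M -> K, scalar_vec x ->
    \sum_j `|dotp x (y j)| ^+ 2 <= B * l2norm x ^+ 2.

Definition khintchine_const (K1 : K) : Prop :=
  forall (n : nat) (a : 'I_n -> K), (forall j, is_scalar (a j)) ->
    K1 * sqrtC (\sum_j `|a j| ^+ 2)
    <= (2 ^+ n)^-1 * \sum_(d : {ffun 'I_n -> bool})
                        `|\sum_j (if d j then 1 else -1) * a j|.

Definition top_eig_bounded (M : nat) (S : 'M[K]_M) (beta : K) : Prop :=
  exists lam : seq K,
    [/\ size lam = M,
        sorted (fun a b => b <= a) lam,
        char_poly S = \prod_(l <- lam) ('X - l%:P)
      & head 0 lam <= beta / M%:R * \sum_(l <- lam) l].

End Defs.

(* Main.v *)
Require Import Defs.
From mathcomp Require Import all_boot all_order all_algebra.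
From mathcomp Require Import ring.
Set Implicit Arguments. Unset Strict Implicit. Unset Printing Implicit Defensive.
Import Order.TTheory GRing.Theory Num.Theory Num.Def.
Local Open Scope ring_scope.

Section Aux.
Variable K : numClosedFieldType.

Lemma sum_sq_le (M : nat) (a : 'I_M -> K) : (forall i, 0 <= a i) ->
  (\sum_i a i) ^+ 2 <= M%:R * \sum_i a i ^+ 2.
Proof.
move=> a0.
have key : forall i k, 2%:R * (a i * a k) <= a i ^+ 2 + a k ^+ 2.
  move=> i k; rewrite -subr_ge0.
  have -> : a i ^+ 2 + a k ^+ 2 - 2%:R * (a i * a k) = (a i - a k) ^+ 2.
    by rewrite sqrrB mulr_natl mulr2n addrAC.
  apply: real_exprn_even_ge0 => //.
  by apply: rpredB; apply: ger0_real.
have h1 : (\sum_i a i) ^+ 2 = \sum_i \sum_k a i * a k.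
  by rewrite expr2 mulr_suml; apply: eq_bigr => i _; rewrite mulr_sumr.
have h2 : \sum_i \sum_k (a i ^+ 2 + a k ^+ 2) = 2%:R * (M%:R * \sum_i a i ^+ 2).
  transitivity (\sum_(i < M) (M%:R * a i ^+ 2 + \sum_k a k ^+ 2)).
    apply: eq_bigr => i _; rewrite big_split /= sumr_const card_ord.
    by rewrite mulr_natl.
  rewrite big_split /= sumr_const card_ord -mulr_sumr.
  by rewrite -mulr_natl; ring.
have h3 : 2%:R * (\sum_i a i) ^+ 2 <= 2%:R * (M%:R * \sum_i a i ^+ 2).
  rewrite h1 -h2 mulr_sumr; apply: ler_sum => i _.
  rewrite mulr_sumr; apply: ler_sum => k _; exact: key.
by rewrite ler_pM2l ?ltr0n in h3.
Qed.

Lemma l1_l2 (M : nat) (w : 'I_M -> K) :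
  \sum_i `|w i| <= sqrtC M%:R * l2norm w.
Proof.
rewrite /l2norm -sqrtCM ?nnegrE ?ler0n ?sumr_ge0 // => [|i _]; last by rewrite exprn_ge0.
rewrite -[X in X <= _](@sqrCK _ (\sum_i `|w i|)); last by rewrite sumr_ge0.
rewrite ler_sqrtC ?nnegrE ?exprn_ge0 ?sumr_ge0 ?mulr_ge0 ?ler0n ?sumr_ge0 //.
- by apply: sum_sq_le.
- by move=> i _; rewrite exprn_ge0.
Qed.

Lemma scalP (rs : bool) (z : K) : (rs -> z \is Num.real) -> is_scalar rs z.
Proof. by rewrite /is_scalar; case: rs => // /(_ isT) ->. Qed.

Lemma scal_r (rs : bool) (z : K) : rs -> is_scalar rs z -> z \is Num.real.
Proof. by rewrite /is_scalar => ->. Qed.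

Lemma sgn_real (b : bool) : (if b then 1 else -1 : K) \is Num.real.
Proof. by case: b; rewrite ?rpredN rpred1. Qed.

Lemma sgn_norm (b : bool) : `|(if b then 1 else -1 : K)| = 1.
Proof. by case: b; rewrite ?normrN normr1. Qed.

Lemma conj_real (z : K) : z \is Num.real -> z^* \is Num.real.
Proof. by move=> zr; rewrite conj_Creal. Qed.

Section ClaimA.
Variables (rs : bool) (N M : nat) (x f : 'I_N -> 'I_M -> K) (C : K).
Hypothesis sx : forall j, scalar_vec rs (x j).
Hypothesis sf : forall j, scalar_vec rs (f j).
Hypothesis HC : forall (y : 'I_M -> K) (eps : 'I_N -> K),
      scalar_vec rs y ->
      (forall j, is_scalar rs (eps j) /\ `|eps j| = 1) ->
      l2norm (fun i => \sum_j eps j * dotp y (f j) * x j i) <= C * l2norm y.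

Lemma claimA (y : 'I_M -> K) (d : {ffun 'I_M -> bool}) : scalar_vec rs y ->
  \sum_j `|dotp y (f j)| * `|\sum_i (if d i then 1 else -1) * x j i|
    <= sqrtC M%:R * (C * l2norm y).
Proof.
move=> sy.
pose b j := \sum_i (if d i then 1 else -1) * x j i.
pose c j := dotp y (f j) * b j.
pose eps j := if c j == 0 then 1 else (c j)^* / `|c j|.
have epsc j : eps j * c j = `|c j|.
  rewrite /eps; case: eqP => [->|/eqP nz]; first by rewrite mulr0 normr0.
  by rewrite mulrAC -normCKC expr2 mulfK // normr_eq0.
have eps_ok j : is_scalar rs (eps j) /\ `|eps j| = 1.
  split.
  - apply: scalP => rsT.
    have cr : c j \is Num.real.
      rewrite /c /dotp /b; apply: rpredM; apply: rpred_sum => i _; apply: rpredM.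
      + exact: (scal_r rsT (sy i)).
      + exact/conj_real/(scal_r rsT (sf j i)).
      + exact: sgn_real.
      + exact: (scal_r rsT (sx j i)).
    rewrite /eps; case: eqP => _; first exact: rpred1.
    by apply: rpredM; [exact: conj_real | rewrite realV; exact: normr_real].
  - rewrite /eps; case: eqP => [_|/eqP nz]; first by rewrite normr1.
    by rewrite normrM normfV normr_id norm_conjC mulfV // normr_eq0.
have Hw := HC sy eps_ok.
set w := (fun i => _) in Hw.
have e1 : \sum_j `|dotp y (f j)| * `|b j| = \sum_j eps j * c j.
  by apply: eq_bigr => j _; rewrite epsc normrM.
have e2 : \sum_j eps j * c j = \sum_i (if d i then 1 else -1) * w i.
  under [RHS]eq_bigr do rewrite mulr_sumr.
  rewrite [RHS]exchange_big /=; apply: eq_bigr => j _.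
  rewrite /c /b mulrA mulr_sumr; apply: eq_bigr => i _; by rewrite mulrCA.
change (\sum_j `|dotp y (f j)| * `|b j| <= sqrtC M%:R * (C * l2norm y)); rewrite e1.
have hs : 0 <= sqrtC (M%:R : K) by rewrite sqrtC_ge0 ler0n.
apply: le_trans (ler_wpM2l hs Hw).
apply: le_trans (l1_l2 w).
rewrite -[X in X <= _]ger0_norm; last first.
  by rewrite -e1 sumr_ge0 // => j _; rewrite mulr_ge0.
rewrite e2; apply: le_trans (ler_norm_sum _ _ _) _.
by apply: ler_sum => i _; rewrite normrM sgn_norm mul1r.
Qed.
End ClaimA.

Lemma sum_ffun_const (M : nat) (c : K) :
  \sum_(d : {ffun 'I_M -> bool}) c = 2 ^+ M * c.
Proof.
by rewrite sumr_const card_ffun card_bool card_ord -[LHS]mulr_natl natrX.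
Qed.

Lemma two_pow_gt0 (M : nat) : 0 < (2 : K) ^+ M.
Proof. by rewrite exprn_gt0 // ltr0n. Qed.

Section ClaimB.
Variables (rs : bool) (N M : nat) (x f : 'I_N -> 'I_M -> K) (C K1 D : K).
Hypothesis sx : forall j, scalar_vec rs (x j).
Hypothesis sf : forall j, scalar_vec rs (f j).
Hypothesis kh : khintchine_const rs K1.
Hypothesis nx : forall j, l2norm (x j) = D.
Hypothesis nf : forall j, l2norm (f j) = D.
Hypothesis K1p : 0 < K1.
Hypothesis Dp : 0 < D.
Hypothesis HC : forall (y : 'I_M -> K) (eps : 'I_N -> K),
      scalar_vec rs y ->
      (forall j, is_scalar rs (eps j) /\ `|eps j| = 1) ->
      l2norm (fun i => \sum_j eps j * dotp y (f j) * x j i) <= C * l2norm y.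

Lemma kh_lb (a : 'I_M -> K) (Da : K) : (forall i, is_scalar rs (a i)) ->
  sqrtC (\sum_i `|a i| ^+ 2) = Da ->
  2 ^+ M * (K1 * Da) <= \sum_(d : {ffun 'I_M -> bool}) `|\sum_i (if d i then 1 else -1) * a i|.
Proof.
move=> sa nDa; have := kh sa; rewrite nDa ler_pdivlMl //; exact: two_pow_gt0.
Qed.

Lemma claimB (y : 'I_M -> K) : scalar_vec rs y ->
  K1 * D * \sum_j `|dotp y (f j)| <= sqrtC M%:R * (C * l2norm y).
Proof.
move=> sy.
set R := sqrtC M%:R * (C * l2norm y).
have sA : \sum_(d : {ffun 'I_M -> bool}) \sum_j `|dotp y (f j)| *
            `|\sum_i (if d i then 1 else -1) * x j i| <= 2 ^+ M * R.
  rewrite -sum_ffun_const; apply: ler_sum => d _; exact: claimA.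
rewrite exchange_big /= in sA.
rewrite -(ler_pM2l (two_pow_gt0 M)); apply: le_trans sA.
rewrite mulrA mulr_sumr; apply: ler_sum => j _.
rewrite -mulr_sumr mulrC; apply: ler_wpM2l; first exact: normr_ge0.
apply: kh_lb; [exact: sx | exact: nx].
Qed.

Lemma claimC : K1 * D * (K1 * D * N%:R) <= C * M%:R.
Proof.
pose yd (d : {ffun 'I_M -> bool}) := fun i => (if d i then 1 else -1 : K).
have hy d : scalar_vec rs (yd d) by move=> i; apply: scalP => _; exact: sgn_real.
have ny d : l2norm (yd d) = sqrtC M%:R.
  rewrite /l2norm; congr sqrtC.
  by rewrite (eq_bigr (fun _ => 1)) ?sumr_const ?card_ord // => i _; rewrite sgn_norm expr1n.
have sB : \sum_(d : {ffun 'I_M -> bool}) K1 * D * \sum_j `|dotp (yd d) (f j)|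
          <= 2 ^+ M * (C * M%:R).
  rewrite -sum_ffun_const; apply: ler_sum => d _.
  apply: le_trans (claimB (hy d)) _; rewrite ny mulrCA -expr2 sqrtCK mulrC.
  by [].
rewrite -(ler_pM2l (two_pow_gt0 M)); apply: le_trans sB.
rewrite -mulr_sumr exchange_big /= mulrCA; apply: ler_wpM2l.
  by rewrite mulr_ge0 // ltW.
rewrite mulrA mulr_natr -[X in _ *+ X <= _]card_ord -sumr_const; apply: ler_sum => j _.
apply: kh_lb.
  by move=> i; apply: scalP => rsT; apply/conj_real/(scal_r rsT (sf j i)).
rewrite -(nf j) /l2norm; congr sqrtC; apply: eq_bigr => i _.
by rewrite norm_conjC.
Qed.
End ClaimB.

Local Open Scope sesquilinear_scope.

Lemma quad_le (M : nat) (S : 'M[K]_M) (h : K) (cu : 'cV[K]_M) :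
  S \is hermsymmx -> (forall a, root (char_poly S) a -> a <= h) ->
  (cu ^t conjC *m S *m cu) 0 0 <= h * (cu ^t conjC *m cu) 0 0.
Proof.
move=> hS hroot.
have /orthomx_spectralP eS := hermitian_normalmx hS.
set P := spectralmx S in eS; set dd := spectral_diag S in eS.
have Pu : P \in unitmx by exact: spectral_unit.
have iP : invmx P = P ^t conjC by rewrite invmx_unitary // spectral_unitarymx.
have dle l : dd 0 l <= h.
  apply: hroot; rewrite -eigenvalue_root_char; apply/eigenvalueP.
  exists (row l P).
    rewrite {1}eS !mulmxA -row_mul mulmxV // row1 -rowE row_diag_mx -scalemxAl.
    by rewrite -rowE.
  apply/eqP => r0.
  have : row l P *m invmx P = delta_mx 0 l by rewrite -row_mul mulmxV // row1.
  rewrite r0 mul0mx => /matrixP /(_ 0 l); rewrite !mxE !eqxx /=.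
  by move/eqP; rewrite eq_sym oner_eq0.
rewrite eS iP.
set w := P *m cu.
have ew : cu ^t conjC *m P ^t conjC = w ^t conjC by rewrite /w trmx_mul map_mxM.
have ww : (w ^t conjC *m w) = cu ^t conjC *m cu.
  by rewrite -ew -mulmxA (mulmxA _ P) -iP mulVmx // mul1mx.
rewrite !mulmxA ew -ww -(mulmxA _ P cu) -/w mul_mx_diag.
rewrite !mxE mulr_sumr; apply: ler_sum => l _.
rewrite !mxE mulrAC [h * _]mulrC.
apply: ler_wpM2l; last exact: dle.
by rewrite -normCKC exprn_ge0.
Qed.

Lemma frame_herm (N M : nat) (y : 'I_N -> 'I_M -> K) : frame_op y \is hermsymmx.
Proof.
apply/is_hermitianmxP; rewrite expr0 scale1r; apply/matrixP => i k.
rewrite !mxE rmorph_sum; apply: eq_bigr => j _.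
by rewrite rmorphM /= conjCK mulrC.
Qed.

Lemma quad_eq (N M : nat) (y : 'I_N -> 'I_M -> K) (u : 'I_M -> K) :
  \sum_j `|dotp u (y j)| ^+ 2 =
  ((\col_i u i) ^t conjC *m frame_op y *m (\col_i u i)) 0 0.
Proof.
rewrite mxE.
under eq_bigr do rewrite normCK /dotp rmorph_sum mulr_suml.
under [RHS]eq_bigr do rewrite !mxE mulr_suml.
rewrite exchange_big /=; apply: eq_bigr => i _.
under eq_bigr do rewrite mulr_sumr.
rewrite exchange_big /=; apply: eq_bigr => k _.
rewrite !mxE mulr_sumr mulr_suml; apply: eq_bigr => j _.
by rewrite rmorphM /= conjCK; ring.
Qed.

Lemma norm_eq (M : nat) (u : 'I_M -> K) :
  ((\col_i u i) ^t conjC *m (\col_i u i)) 0 0 = l2norm u ^+ 2.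
Proof.
rewrite /l2norm sqrtCK !mxE; apply: eq_bigr => i _.
by rewrite !mxE normCKC.
Qed.

Lemma sum_seq_le (s : seq K) (h : K) : (forall l, l \in s -> l <= h) ->
  \sum_(l <- s) l <= h *+ size s.
Proof.
elim: s => [|a s IH] H; first by rewrite big_nil.
rewrite big_cons /= mulrS lerD ?H ?mem_head // IH // => l ls.
by apply: H; rewrite inE ls orbT.
Qed.

Lemma spec_bound (N M : nat) (y : 'I_N -> 'I_M -> K) (beta D : K) :
  (0 < M)%N -> (forall j, l2norm (y j) = D) -> top_eig_bounded (frame_op y) beta ->
  exists h : K, [/\ forall u : 'I_M -> K,
        \sum_j `|dotp u (y j)| ^+ 2 <= h * l2norm u ^+ 2,
     N%:R * D ^+ 2 <= M%:R * h & h <= beta / M%:R * (N%:R * D ^+ 2)].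
Proof.
move=> M0 ny [lam [sz srt cp hb]].
exists (head 0 lam).
have lele : forall l, l \in lam -> l <= head 0 lam.
  move: srt; case: (lam) => [|a s] //= srt l.
  rewrite inE => /orP [/eqP -> //|ls].
  have tr : transitive (fun a b : K => b <= a).
    by move=> p q r h1 h2; exact: le_trans h2 h1.
  by move: (order_path_min tr srt) => /allP /(_ l ls).
have tr : \sum_(l <- lam) l = N%:R * D ^+ 2.
  have := char_poly_trace (frame_op y) M0.
  rewrite cp -[in X in (_`_X)]sz coefPn_prod_XsubC; last by rewrite sz -lt0n.
  move/oppr_inj => ->; rewrite /mxtrace.
  under eq_bigr do rewrite mxE.
  rewrite exchange_big /= -[N in N%:R]card_ord mulr_natl -sumr_const.
  apply: eq_bigr => j _.
  rewrite -(ny j) /l2norm sqrtCK; apply: eq_bigr => i _.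
  by rewrite normCK.
split.
- move=> u; rewrite quad_eq -norm_eq; apply: quad_le; first exact: frame_herm.
  by move=> a; rewrite cp root_prod_XsubC; exact: lele.
- by rewrite -tr -sz mulr_natl; apply: sum_seq_le.
- by rewrite -tr.
Qed.

Lemma K1_le1 (rs : bool) (K1 : K) : khintchine_const rs K1 -> K1 <= 1.
Proof.
move=> kh.
have := kh 1%N (fun _ => 1) (fun _ => @scalP rs 1 (fun _ => rpred1 _)).
rewrite big_ord1 normr1 expr1n sqrtC1 mulr1.
under eq_bigr do rewrite big_ord1 mulr1 sgn_norm.
rewrite sum_ffun_const mulr1 mulVf //.
by rewrite expr1 pnatr_eq0.
Qed.

Lemma final (rs : bool) (K1 C D beta : K) (N M : nat) (y : 'I_N -> 'I_M -> K) :
  0 < K1 -> K1 <= 1 -> 0 < C -> 0 < D -> 0 < beta ->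
  (forall j, l2norm (y j) = D) ->
  K1 * D * (K1 * D * N%:R) <= C * M%:R ->
  top_eig_bounded (frame_op y) beta ->
  bessel_bound rs y (27 / 4 * K1 ^- 4 * beta ^+ 2 * C).
Proof.
move=> K1p K11 Cp Dp bp ny cC tb u _.
set B := 27 / 4 * K1 ^- 4 * beta ^+ 2 * C.
have Bp : 0 <= B.
  by rewrite /B !mulr_ge0 //; rewrite ?invr_ge0 ?exprn_ge0 ?ler0n ?ltW.
have u0 : 0 <= l2norm u ^+ 2 by rewrite exprn_ge0 // sqrtC_ge0 sumr_ge0 // => i _; rewrite exprn_ge0.
have [M0|Mpos] := posnP M.
  subst M; rewrite big1 => [|j _]; first exact: mulr_ge0.
  by rewrite /dotp big_ord0 normr0 expr0n.
have [h [hq hT hb]] := spec_bound Mpos ny tb.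
apply: le_trans (hq u) _; apply: ler_wpM2r => //.
set T := N%:R * D ^+ 2 in hT hb.
have Mn0 : (M%:R : K) != 0 by rewrite pnatr_eq0 -lt0n.
have [N0|Npos] := posnP N.
  apply: le_trans hb _; subst N; rewrite /T mul0r mulr0 //.
have Tp : 0 < T by rewrite /T mulr_gt0 ?ltr0n ?exprn_gt0.
have b1 : 1 <= beta.
  have : T <= beta * T.
    apply: le_trans hT _.
    have -> : beta * T = M%:R * (beta / M%:R * T) by field.
    by apply: ler_wpM2l => //; rewrite ler0n.
  by rewrite -{1}[T]mul1r ler_pM2r.
apply: le_trans hb _.
rewrite -subr_ge0.
have K1n0 : K1 != 0 by rewrite gt_eqF.
have -> : B - beta / M%:R * T =
   beta * (C * M%:R * (27 * beta - 4 * K1 ^+ 2) + 4 * K1 ^+ 2 * (C * M%:R - K1 ^+ 2 * T))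
     / (4 * K1 ^+ 4 * M%:R).
  by rewrite /B; field; rewrite Mn0 K1n0.
apply: divr_ge0; last by rewrite !mulr_ge0 ?ler0n ?exprn_ge0 ?ltW.
apply: mulr_ge0; first exact: ltW.
apply: addr_ge0.
  apply: mulr_ge0; first by rewrite mulr_ge0 ?ler0n ?ltW.
  rewrite subr_ge0; apply: (@le_trans _ _ 4).
    rewrite -[X in _ <= X]mulr1; apply: ler_wpM2l; first by rewrite ler0n.
    by rewrite exprn_ile1 // ltW.
  apply: (@le_trans _ _ 27); first by rewrite ler_nat.
  by rewrite ler_peMr // ler0n.
apply: mulr_ge0; first by rewrite mulr_ge0 ?ler0n ?exprn_ge0 ?ltW.
rewrite subr_ge0; apply: le_trans cC; rewrite /T.
rewrite le_eqVlt; apply/orP; left; apply/eqP; ring.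
Qed.
End Aux.

Theorem lemma4p5 (K : numClosedFieldType) (realscal : bool)
  (K1 C D beta : K) (N M : nat) (x f : 'I_N -> 'I_M -> K) :
  0 < K1 -> khintchine_const realscal K1 ->
  0 < C -> 0 < D -> 0 < beta ->
  (forall j, scalar_vec realscal (x j)) ->
  (forall j, scalar_vec realscal (f j)) ->
  (forall j, l2norm (x j) = D) -> (forall j, l2norm (f j) = D) ->
  (forall (y : 'I_M -> K) (eps : 'I_N -> K),
      scalar_vec realscal y ->
      (forall j, is_scalar realscal (eps j) /\ `|eps j| = 1) ->
      l2norm (fun i => \sum_j eps j * dotp y (f j) * x j i) <= C * l2norm y) ->
  (top_eig_bounded (frame_op f) beta ->
     bessel_bound realscal f (27 / 4 * K1 ^- 4 * beta ^+ 2 * C)) /\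
  (top_eig_bounded (frame_op x) beta ->
     bessel_bound realscal x (27 / 4 * K1 ^- 4 * beta ^+ 2 * C)).
Proof.
move=> K1p kh Cp Dp bp sx sf nx nf HC.
have cC : K1 * D * (K1 * D * N%:R) <= C * M%:R.
  by apply: (@claimC K realscal N M x f C K1 D).
have K11 := K1_le1 kh.
split => tb; [exact: (final K1p K11 Cp Dp bp nf cC tb) | exact: (final K1p K11 Cp Dp bp nx cC tb)].
Qed.
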